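(* There is an absolute constant $C>0$ (independent of $K$, $V_T$, $T$) such that for every $T\geq 1$, every $K\geq 2$, every $V_T\in[K^{-1},K^{-1}T]$, and every admissible policy $\pi\in\mathcal{P}$, when all rewards are Bernoulli, \[ \mathcal{R}^{\pi}(\mathcal{V},T)\;\geq\; C\,(K V_T)^{1/3}\,T^{2/3}. \]
   Context: Multi-armed bandit with arms $\mathcal{K}=\{1,\dots,K\}$ and decision epochs $t\in\{1,\dots,T\}$. Pulling arm $k$ at epoch $t$ yields a reward $X_t^k\in[0,1]$ with mean $\mu_t^k=\mathbb{E}[X_t^k]$; here $X_t^k$ is Bernoulli with parameter $\mu_t^k$, rewards independent across epochs. Write $\mu=(\mu_t^k)_{k\in\mathcal{K},t\le T}$ and $\mu_t^*=\max_{k}\mu_t^k$. For a variation budget $V_T>0$, the temporal uncertainty set is $\mathcal{V}=\{\mu\in[0,1]^{K\times T}:\ \sum_{t=1}^{T-1}\sup_{k\in\mathcal{K}}|\mu_t^k-\mu_{t+1}^k|\le V_T\}$. An admissible policy $\pi\in\mathcal{P}$: given a random variable $U$ on some probability space (independent of the rewards), measurable maps $\pi_1(U)\in\mathcal{K}$ and $\pi_t(X_{t-1}^\pi,\dots,X_1^\pi,U)\in\mathcal{K}$ for $t\ge2$, where $X_s^\pi$ is the reward observed at epoch $s$ from the pulled arm $\pi_s$ (non-anticipating, possibly randomized). The regret is $\mathcal{R}^{\pi}(\mathcal{V},T)=\sup_{\mu\in\mathcal{V}}\big\{\sum_{t=1}^T\mu_t^*-\mathbb{E}^\pi[\sum_{t=1}^T\mu_t^{\pi_t}]\big\}$,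 the expectation over rewards and the policy's randomization. *)

(* Defs.v *)
From Stdlib Require Import Reals List.
Open Scope R_scope.

(* Arms are 0..K-1, epochs are 0..T-1 (epoch t of the paper is index t-1).
   A mean profile is mu : nat -> nat -> R, mu t k = mean of arm k at epoch t. *)

Fixpoint maxK (f : nat -> R) (K : nat) : R :=
  match K with
  | O => 0
  | S O => f O
  | S K' => Rmax (maxK f K') (f K')
  end.

Fixpoint sumR (f : nat -> R) (n : nat) : R :=
  match n with
  | O => 0
  | S n' => sumR f n' + f n'
  end.

Definition in_V (K T : nat) (VT : R) (mu : nat -> nat -> R) : Prop :=
  (forall t k, (t < T)%nat -> (k < K)%nat -> 0 <= mu t k <= 1) /\
  sumR (fun t => maxK (fun k => Rabs (mu t k - mu (S t) k)) K) (T - 1) <= VT.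

(* A deterministic non-anticipating policy: maps the history of observed
   (Bernoulli, hence boolean) rewards, most recent first, to an arm. *)
Definition det_policy := list bool -> nat.

Fixpoint exp_reward (p : det_policy) (mu : nat -> nat -> R)
    (t : nat) (h : list bool) (n : nat) : R :=
  match n with
  | O => 0
  | S n' =>
      let k := p h in
      mu t k
      + mu t k * exp_reward p mu (S t) (true :: h) n'
      + (1 - mu t k) * exp_reward p mu (S t) (false :: h) n'
  end.

(* A randomized admissible policy: a probability distribution (weights w on
   indices 0..m-1) over deterministic policies ps i.  Regret against mu: *)
Definition regret (K T : nat) (m : nat) (w : nat -> R) (ps : nat -> det_policy)
    (mu : nat -> nat -> R) : R :=
  sumR (fun t => maxK (mu t) K) T
  - sumR (fun i => w i * exp_reward (ps i) mu 0 nil T) m.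

Definition is_randomized_policy (K m : nat) (w : nat -> R) (ps : nat -> det_policy) : Prop :=
  (forall i, (i < m)%nat -> 0 <= w i) /\
  sumR w m = 1 /\
  (forall i h, (i < m)%nat -> (ps i h < K)%nat).

(* Main.v *)
Require Import Defs.
From Stdlib Require Import Reals List Lra Lia Psatz ZArith.
Open Scope R_scope.

Lemma sumR_ext : forall f g n, (forall i, (i < n)%nat -> f i = g i) -> sumR f n = sumR g n.
Proof. induction n; simpl; intros; auto. rewrite IHn by (intros; apply H; lia). rewrite H by lia. reflexivity. Qed.

Lemma sumR_lin : forall a b f g n, sumR (fun i => a * f i + b * g i) n = a * sumR f n + b * sumR g n.
Proof. induction n; simpl; intros; [ring|rewrite IHn; ring]. Qed.

Lemma sumR_const : forall c n, sumR (fun _ => c) n = INR n * c.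
Proof. induction n; [simpl; ring|]. rewrite S_INR. simpl sumR. rewrite IHn; ring. Qed.

Lemma sumR_le : forall f g n, (forall i, (i < n)%nat -> f i <= g i) -> sumR f n <= sumR g n.
Proof. induction n; simpl; intros; [lra|]. assert (f n <= g n) by (apply H; lia).
 assert (sumR f n <= sumR g n) by (apply IHn; intros; apply H; lia). lra. Qed.

Lemma sumR_ge : forall c f n, (forall i, (i < n)%nat -> c <= f i) -> INR n * c <= sumR f n.
Proof. intros. rewrite <- sumR_const. apply sumR_le. auto. Qed.

Lemma sumR_scal : forall a f n, sumR (fun i => a * f i) n = a * sumR f n.
Proof. induction n; simpl; [ring|rewrite IHn; ring]. Qed.

Lemma sumR_indic : forall k K, (k < K)%nat -> sumR (fun j => if Nat.eqb k j then 1 else 0) K = 1.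
Proof. induction K; intros; [lia|]. simpl. destruct (Nat.eq_dec k K).
 - subst. rewrite Nat.eqb_refl. rewrite (sumR_ext _ (fun _ => 0)). rewrite sumR_const. ring.
   intros. destruct (Nat.eqb_spec K i); [lia|auto].
 - rewrite IHK by lia. destruct (Nat.eqb_spec k K); [lia|ring]. Qed.

Lemma sumR_shift : forall g n, g O + sumR (fun i => g (S i)) n = sumR g n + g n.
Proof. induction n; simpl; [ring|]. rewrite <- IHn. ring. Qed.

Fixpoint ExT (p : det_policy) (mu : nat -> nat -> R) (t : nat) (h : list bool) (n : nat)
  (f : nat -> list bool -> R) (G : list bool -> R) : R :=
  match n with
  | O => G h
  | S n' => f t h + mu t (p h) * ExT p mu (S t) (true :: h) n' f G
            + (1 - mu t (p h)) * ExT p mu (S t) (false :: h) n' f G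
  end.

Lemma exp_reward_ExT : forall p mu n t h,
  exp_reward p mu t h n = ExT p mu t h n (fun s h => mu s (p h)) (fun _ => 0).
Proof. induction n; simpl; intros; [reflexivity| rewrite !IHn; reflexivity]. Qed.

Lemma ExT_lin : forall p mu n t h a b f1 f2 G1 G2,
  ExT p mu t h n (fun s h => a * f1 s h + b * f2 s h) (fun h => a * G1 h + b * G2 h)
  = a * ExT p mu t h n f1 G1 + b * ExT p mu t h n f2 G2.
Proof. induction n; simpl; intros; [reflexivity| rewrite !IHn; ring]. Qed.

Lemma ExT_ext : forall p mu1 mu2 n t h f1 f2 G1 G2,
  (forall s k, (t <= s < t + n)%nat -> mu1 s k = mu2 s k) ->
  (forall s h, (t <= s < t + n)%nat -> f1 s h = f2 s h) ->
  (forall h, G1 h = G2 h) ->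
  ExT p mu1 t h n f1 G1 = ExT p mu2 t h n f2 G2.
Proof. induction n; simpl; intros; auto.
 rewrite (IHn (S t) (true::h) f1 f2 G1 G2), (IHn (S t) (false::h) f1 f2 G1 G2);
  try (intros; first [apply H | apply H0]; lia); auto.
 rewrite H, H0 by lia. reflexivity. Qed.

Lemma ExT_shift : forall p mu n a t h f G,
  ExT p mu (a + t) h n f G = ExT p (fun s => mu (a + s)%nat) t h n (fun s => f (a + s)%nat) G.
Proof. induction n; simpl; intros; auto. replace (S (a + t)) with (a + S t)%nat by lia.
 rewrite !IHn. reflexivity. Qed.

Lemma ExT_split : forall p mu n1 n2 t h f G,
  ExT p mu t h (n1 + n2) f G = ExT p mu t h n1 f (fun h' => ExT p mu (t + n1) h' n2 f G).
Proof. induction n1; simpl; intros. rewrite Nat.add_0_r; reflexivity.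
 rewrite !IHn1. replace (S t + n1)%nat with (t + S n1)%nat by lia. reflexivity. Qed.

Lemma ExT_const : forall p mu n t h c, ExT p mu t h n (fun _ _ => 0) (fun _ => c) = c.
Proof. induction n; simpl; intros; auto. rewrite !IHn. ring. Qed.

Lemma ExT_mono : forall p mu n t h f1 f2 G1 G2,
  (forall s k, 0 <= mu s k <= 1) ->
  (forall s h, f1 s h <= f2 s h) -> (forall h, G1 h <= G2 h) ->
  ExT p mu t h n f1 G1 <= ExT p mu t h n f2 G2.
Proof. induction n; simpl; intros; auto.
 pose proof (IHn (S t) (true::h) f1 f2 G1 G2 H H0 H1).
 pose proof (IHn (S t) (false::h) f1 f2 G1 G2 H H0 H1).
 pose proof (H t (p h)). pose proof (H0 t h).
 apply Rplus_le_compat; [apply Rplus_le_compat|]; auto; apply Rmult_le_compat_l; lra. Qed.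

Lemma ExT_nonneg : forall p mu n t h f G,
  (forall s k, 0 <= mu s k <= 1) -> (forall s h, 0 <= f s h) -> (forall h, 0 <= G h) ->
  0 <= ExT p mu t h n f G.
Proof. intros. rewrite <- (ExT_const p mu n t h 0) at 1. apply ExT_mono; auto. Qed.

Lemma ExT_time : forall p mu n t h c,
  ExT p mu t h n (fun s _ => c s) (fun _ => 0) = sumR (fun i => c (t + i)%nat) n.
Proof. induction n; simpl; intros; auto. rewrite !IHn.
 pose proof (sumR_shift (fun i => c (t + i)%nat) n). simpl in H.
 rewrite Nat.add_0_r in H. rewrite <- H.
 rewrite (sumR_ext (fun i => c (S t + i)%nat) (fun i => c (t + S i)%nat)) by (intros; f_equal; lia).
 ring. Qed.

Lemma ExT_sum : forall p mu n t h K F,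
  ExT p mu t h n (fun s h => sumR (fun j => F j s h) K) (fun _ => 0)
  = sumR (fun j => ExT p mu t h n (F j) (fun _ => 0)) K.
Proof. induction K; intros; simpl.
 - apply (ExT_const p mu n t h 0).
 - rewrite <- IHK. rewrite <- (Rmult_1_l (ExT p mu t h n (fun s h0 => sumR _ K) _)).
   rewrite <- (Rmult_1_l (ExT p mu t h n (F K) _)). rewrite <- ExT_lin.
   apply ExT_ext; intros; auto; ring. Qed.

Definition cons_g (j : nat) (g : nat -> nat) : nat -> nat :=
  fun b => match b with O => j | S b' => g b' end.

Fixpoint avgG (K r : nat) (F : (nat -> nat) -> R) : R :=
  match r with
  | O => F (fun _ => O)
  | S r' => / INR K * sumR (fun j => avgG K r' (fun g => F (cons_g j g))) K
  end.

Lemma avgG_ext : forall K r F1 F2, (forall g, F1 g = F2 g) -> avgG K r F1 = avgG K r F2.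
Proof. induction r; simpl; intros; auto. f_equal. apply sumR_ext; intros. apply IHr. auto. Qed.

Lemma avgG_lin : forall K r a b F1 F2,
  avgG K r (fun g => a * F1 g + b * F2 g) = a * avgG K r F1 + b * avgG K r F2.
Proof. induction r; simpl; intros; auto.
 rewrite (sumR_ext _ (fun j => a * avgG K r (fun g => F1 (cons_g j g)) + b * avgG K r (fun g => F2 (cons_g j g))))
  by (intros; apply IHr). rewrite sumR_lin. ring. Qed.

Lemma avgG_ge : forall K r F c, (0 < K)%nat -> (forall g, c <= F g) -> c <= avgG K r F.
Proof. induction r; simpl; intros; auto.
 assert (INR K * c <= sumR (fun j => avgG K r (fun g => F (cons_g j g))) K).
 { apply sumR_ge. intros. apply IHr; auto. }
 assert (0 < INR K) by (apply lt_0_INR; auto).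
 apply (Rmult_le_reg_l (INR K)); auto. field_simplify; lra. Qed.

Lemma argmax_ex : forall (a : nat -> R) K, (0 < K)%nat ->
  exists j, (j < K)%nat /\ forall i, (i < K)%nat -> a i <= a j.
Proof. induction K; intros; [lia|]. destruct K.
 - exists O; split; auto. intros; replace i with O by lia; lra.
 - destruct (IHK ltac:(lia)) as [j [Hj Hm]].
   destruct (Rle_dec (a j) (a (S K))).
   + exists (S K); split; [lia|]. intros. destruct (Nat.eq_dec i (S K)); [subst; lra|].
     pose proof (Hm i ltac:(lia)); lra.
   + exists j; split; [lia|]. intros. destruct (Nat.eq_dec i (S K)); [subst; lra|]. apply Hm; lia.
Qed.

Lemma avg_le_max : forall (a : nat -> R) K, (0 < K)%nat ->
  exists j, (j < K)%nat /\ / INR K * sumR a K <= a j.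
Proof. intros. destruct (argmax_ex a K H) as [j [Hj Hm]]. exists j; split; auto.
 assert (sumR a K <= INR K * a j). { rewrite <- sumR_const. apply sumR_le. auto. }
 assert (0 < INR K) by (apply lt_0_INR; auto).
 apply (Rmult_le_reg_l (INR K)); auto. field_simplify; lra. Qed.

Lemma avgG_exists : forall K r F, (0 < K)%nat ->
  exists g, (forall b, (g b < K)%nat) /\ avgG K r F <= F g.
Proof. induction r; simpl; intros.
 - exists (fun _ => O). split; [intros; lia| lra].
 - destruct (avg_le_max (fun j => avgG K r (fun g => F (cons_g j g))) K H) as [j [Hj Hle]].
   destruct (IHr (fun g => F (cons_g j g)) H) as [g [Hg Hle2]].
   exists (cons_g j g). split; [intros [|b]; simpl; auto|]. lra. Qed.

Lemma avgG_sum : forall K r m (w : nat -> R) (F : nat -> (nat -> nat) -> R),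
  avgG K r (fun g => sumR (fun i => w i * F i g) m) = sumR (fun i => w i * avgG K r (F i)) m.
Proof. induction m; intros; simpl.
 - transitivity (avgG K r (fun g => 0 * 0 + 0 * 0)); [apply avgG_ext; intros; ring|].
   rewrite (avgG_lin K r 0 0 (fun _ => 0) (fun _ => 0)); ring.
 - rewrite <- IHm. rewrite <- (Rmult_1_l (avgG K r (fun g => sumR _ m))).
   rewrite <- avgG_lin. apply avgG_ext; intros; ring. Qed.

Lemma avgG_ExT : forall K r p mu n t h H,
  ExT p mu t h n (fun _ _ => 0) (fun h' => avgG K r (fun g => H g h'))
  = avgG K r (fun g => ExT p mu t h n (fun _ _ => 0) (H g)).
Proof. induction n; simpl; intros; auto. rewrite !IHn.
 rewrite (avgG_ext K r (fun g => 0 + mu t (p h) * ExT p mu (S t) (true :: h) n (fun _ _ => 0) (H g)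
   + (1 - mu t (p h)) * ExT p mu (S t) (false :: h) n (fun _ _ => 0) (H g)) (fun g => mu t (p h) * ExT p mu (S t) (true :: h) n (fun _ _ => 0) (H g)
   + (1 - mu t (p h)) * ExT p mu (S t) (false :: h) n (fun _ _ => 0) (H g))) by (intros; ring).
 rewrite avgG_lin. ring. Qed.

Fixpoint Pr (p : det_policy) (j m : nat) (q : R) (h : list bool) (n c : nat) {struct n} : R :=
  if Nat.leb m c then 1 else
  match n with
  | O => 0
  | S n' => if Nat.eqb (p h) j
            then q * Pr p j m q (true::h) n' (S c) + (1 - q) * Pr p j m q (false::h) n' (S c)
            else 1/2 * Pr p j m q (true::h) n' c + (1 - 1/2) * Pr p j m q (false::h) n' c
  end.

Fixpoint Qf (p : det_policy) (j m : nat) (e : R) (h : list bool) (n c : nat) {struct n} : R :=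
  if Nat.leb m c then 1 else
  match n with
  | O => 1
  | S n' => if Nat.eqb (p h) j
            then (1+2*e)^2/2 * Qf p j m e (true::h) n' (S c) + (1-2*e)^2/2 * Qf p j m e (false::h) n' (S c)
            else 1/2 * Qf p j m e (true::h) n' c + 1/2 * Qf p j m e (false::h) n' c
  end.

Lemma Pr_bounds : forall p j m q n h c, 0 <= q <= 1 -> 0 <= Pr p j m q h n c <= 1.
Proof. induction n; intros; simpl; destruct (Nat.leb m c); try lra.
 destruct (Nat.eqb (p h) j).
 - pose proof (IHn (true::h) (S c) H); pose proof (IHn (false::h) (S c) H). nra.
 - pose proof (IHn (true::h) c H); pose proof (IHn (false::h) c H). nra. Qed.

Definition cntf (p : det_policy) (j : nat) : nat -> list bool -> R :=
  fun _ h => if Nat.eqb (p h) j then 1 else 0.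

Lemma L1 : forall p j m n h c t,
  INR m * Pr p j m (1/2) h n c <= INR c + ExT p (fun _ _ => 1/2) t h n (cntf p j) (fun _ => 0).
Proof. induction n; intros; simpl.
 - destruct (Nat.leb_spec m c). apply le_INR in H. lra. pose proof (pos_INR c). lra.
 - destruct (Nat.leb_spec m c).
   + apply le_INR in H. assert (0 <= ExT p (fun _ _ => 1/2) (S t) (true::h) n (cntf p j) (fun _ => 0)).
     { apply ExT_nonneg; intros; unfold cntf; try lra. destruct (Nat.eqb _ _); lra. }
     assert (0 <= ExT p (fun _ _ => 1/2) (S t) (false::h) n (cntf p j) (fun _ => 0)).
     { apply ExT_nonneg; intros; unfold cntf; try lra. destruct (Nat.eqb _ _); lra. }
     change (cntf p j t h) with (if Nat.eqb (p h) j then 1 else 0). destruct (Nat.eqb _ _); lra.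
   + pose proof (IHn (true::h) (S c) (S t)). pose proof (IHn (false::h) (S c) (S t)).
     pose proof (IHn (true::h) c (S t)). pose proof (IHn (false::h) c (S t)).
     rewrite S_INR in *. change (cntf p j t h) with (if Nat.eqb (p h) j then 1 else 0). destruct (Nat.eqb (p h) j); lra. Qed.

Lemma L2 : forall p j m e n h c a,
  a * Pr p j m (1/2 + e) h n c <= 5/4 * Pr p j m (1/2) h n c + (a^2 * Qf p j m e h n c - 2*a + 1).
Proof. induction n; intros; simpl.
 - pose proof (pow2_ge_0 (a - 3/2)); pose proof (pow2_ge_0 (a - 1)). destruct (Nat.leb m c); nra.
 - pose proof (pow2_ge_0 (a - 3/2)). destruct (Nat.leb m c). nra.
   destruct (Nat.eqb (p h) j).
   + pose proof (IHn (true::h) (S c) (a * (1 + 2*e))). pose proof (IHn (false::h) (S c) (a * (1 - 2*e))).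
     lra.
   + pose proof (IHn (true::h) c a). pose proof (IHn (false::h) c a). lra. Qed.

Lemma L3 : forall p j m e n h c, Qf p j m e h n c <= (1 + 4*e^2)^(m - c).
Proof. assert (Hb : forall e k, 1 <= (1 + 4*e^2)^k) by (intros; apply pow_R1_Rle; nra).
 induction n; intros; cbn [Qf].
 - destruct (Nat.leb m c); apply Hb.
 - destruct (Nat.leb_spec m c). apply Hb.
   destruct (Nat.eqb (p h) j).
   + set (B := 1 + 4*e^2) in *. replace (m - c)%nat with (S (m - S c)) by lia.
     pose proof (IHn (true::h) (S c)). pose proof (IHn (false::h) (S c)).
     assert (0 <= (1+2*e)^2/2) by (pose proof (pow2_ge_0 (1+2*e)); lra).
     assert (0 <= (1-2*e)^2/2) by (pose proof (pow2_ge_0 (1-2*e)); lra).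
     apply Rle_trans with ((1+2*e)^2/2 * (1 + 4*e^2)^(m - S c) + (1-2*e)^2/2 * (1 + 4*e^2)^(m - S c)).
     apply Rplus_le_compat; apply Rmult_le_compat_l; auto. right. change (B ^ S (m - S c)) with (B * B ^ (m - S c)). unfold B. generalize ((1 + 4 * e ^ 2) ^ (m - S c)). intro X. field.
   + pose proof (IHn (true::h) c). pose proof (IHn (false::h) c). lra. Qed.

Definition envb (e : R) (j : nat) : nat -> nat -> R := fun _ k => 1/2 + (if Nat.eqb k j then e else 0).
Definition indb (p : det_policy) (j : nat) : nat -> list bool -> R := fun _ h => if Nat.eqb (p h) j then 0 else 1.

Lemma envb01 : forall e j, 0 <= e <= 1/2 -> forall s k, 0 <= envb e j s k <= 1.
Proof. intros. unfold envb. destruct (Nat.eqb k j); lra. Qed.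

Lemma L4 : forall p j m e, 0 <= e <= 1/2 -> forall n h c t,
  (INR n - INR m + 1 + INR c) * (1 - Pr p j m (1/2 + e) h n c)
  <= ExT p (envb e j) t h n (indb p j) (fun _ => 0).
Proof. intros p j m e He. induction n; intros; cbn [Pr ExT].
 - destruct (Nat.leb_spec m c). lra. assert (INR (S c) <= INR m) by (apply le_INR; lia). rewrite S_INR in H0. change (INR 0) with 0. lra.
 - destruct (Nat.leb_spec m c).
   + assert (0 <= ExT p (envb e j) t h (S n) (indb p j) (fun _ => 0)).
     { apply ExT_nonneg; intros; unfold indb; try lra. apply envb01; auto. destruct (Nat.eqb _ _); lra. }
     simpl in H0. lra.
   + rewrite S_INR. change (envb e j t (p h)) with (1/2 + (if Nat.eqb (p h) j then e else 0)).
     change (indb p j t h) with (if Nat.eqb (p h) j then 0 else 1).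
     destruct (Nat.eqb (p h) j).
     * pose proof (IHn (true::h) (S c) (S t)). pose proof (IHn (false::h) (S c) (S t)).
       rewrite S_INR in *.
       assert (0 <= 1/2 + e) by lra. assert (0 <= 1 - (1/2 + e)) by lra.
       pose proof (Rmult_le_compat_l _ _ _ H2 H0). pose proof (Rmult_le_compat_l _ _ _ H3 H1). lra.
     * pose proof (IHn (true::h) c (S t)). pose proof (IHn (false::h) c (S t)).
       pose proof (Pr_bounds p j m (1/2+e) n (true::h) c ltac:(lra)).
       pose proof (Pr_bounds p j m (1/2+e) n (false::h) c ltac:(lra)). lra. Qed.

Lemma bern : forall x m, 0 <= x -> (1+x)^m * (1 - INR m * x) <= 1.
Proof. induction m; intros. simpl. lra. rewrite S_INR. rewrite <- tech_pow_Rmult.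
 pose proof (IHm H). assert (0 <= (1+x)^m) by (apply pow_le; lra).
 assert (0 <= (1+x)^m * (INR m + 1) * x * x). { apply Rmult_le_pos; [|lra]. apply Rmult_le_pos; [|lra].
   apply Rmult_le_pos; auto. pose proof (pos_INR m); lra. }
 nra. Qed.

Lemma cnt_total : forall p K D h, (forall h, (p h < K)%nat) ->
  sumR (fun j => ExT p (fun _ _ => 1/2) 0 h D (cntf p j) (fun _ => 0)) K = INR D.
Proof. intros. rewrite <- ExT_sum.
 rewrite (ExT_ext p _ (fun _ _ => 1/2) D 0 h _ (fun s _ => (fun _ : nat => 1) s) _ (fun _ => 0)).
 - rewrite ExT_time. rewrite sumR_const. ring.
 - auto.
 - intros. unfold cntf. apply sumR_indic. auto.
 - auto. Qed.

Lemma SB : forall K D e p h, (2 <= K)%nat -> (forall h, (p h < K)%nat) -> 0 <= e <= 1/2 ->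
  52 * e^2 * INR ((3*D)/(2*K) + 1) <= 1 ->
  INR D / 48 <= / INR K * sumR (fun j => ExT p (envb e j) 0 h D (indb p j) (fun _ => 0)) K.
Proof. intros K D e p h HK Hp He Hm.
 set (q := ((3*D)/(2*K))%nat) in *. set (m := (q + 1)%nat) in *.
 assert (Hq1 : (2*K*q <= 3*D)%nat) by (apply Nat.Div0.mul_div_le; lia).
 assert (Hq2 : (3*D < 2*K*(q+1))%nat).
 { pose proof (Nat.div_mod (3*D) (2*K) ltac:(lia)). pose proof (Nat.mod_upper_bound (3*D) (2*K) ltac:(lia)).
   fold q in H. lia. }
 assert (Hq3 : (4*q <= 3*D)%nat) by nia.
 assert (R1 : 3 * INR D <= 2 * INR K * INR m).
 { assert (INR (3*D) <= INR (2*K*m)) by (apply le_INR; unfold m; lia). rewrite !mult_INR in H. simpl in H. lra. }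
 assert (R2 : 4 * (INR D - INR m + 1) >= INR D).
 { assert (INR (4*q) <= INR (3*D)) by (apply le_INR; lia). rewrite !mult_INR in H. unfold m. rewrite plus_INR. simpl in *. lra. }
 assert (Km : 0 < INR K) by (apply lt_0_INR; lia).
 assert (mpos : 0 < INR m) by (apply lt_0_INR; unfold m; lia).
 set (P := (1 + 4*e^2)^m).
 assert (HP : P <= 13/12).
 { pose proof (bern (4*e^2) m ltac:(nra)). fold P in H. assert (0 <= P) by (apply pow_le; nra). nra. }
 pose proof (pos_INR D) as HD0. set (L := INR D - INR m + 1). assert (HL : 0 <= L) by (unfold L; lra). assert (HL4 : INR D <= 4 * L) by (unfold L; lra).
 set (P0 := fun j => Pr p j m (1/2) h D 0).
 assert (HA : forall j, (j < K)%nat -> L * (2 - P) + (- (5/4) * L) * P0 j <=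
     ExT p (envb e j) 0 h D (indb p j) (fun _ => 0)).
 { intros. pose proof (L4 p j m e He D h 0 0). change (INR 0) with 0 in H0. rewrite Rplus_0_r in H0.
   pose proof (L2 p j m e D h 0 1). pose proof (L3 p j m e D h 0). rewrite Nat.sub_0_r in H2. fold P in H2.
   fold L in H0. unfold P0.
   assert (Pr p j m (1/2+e) h D 0 <= 5/4 * Pr p j m (1/2) h D 0 + (P - 1)) by lra.
   assert (0 <= L) by lra.
   assert (L * (1 - (5/4 * Pr p j m (1/2) h D 0 + (P - 1))) <= L * (1 - Pr p j m (1/2+e) h D 0))
     by (apply Rmult_le_compat_l; lra). lra. }
 assert (HS0 : INR m * sumR P0 K <= INR D).
 { rewrite <- sumR_scal. rewrite <- (cnt_total p K D h Hp). apply sumR_le. intros.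
   pose proof (L1 p i m D h 0 0). change (INR 0) with 0 in H0. unfold P0. lra. }
 assert (HS : sumR (fun j => L * (2 - P) * 1 + (- (5/4) * L) * P0 j) K <=
   sumR (fun j => ExT p (envb e j) 0 h D (indb p j) (fun _ => 0)) K).
 { apply sumR_le. intros. rewrite Rmult_1_r. apply HA; auto. }
 rewrite sumR_lin, sumR_const in HS.
 assert (sumR P0 K <= 2/3 * INR K).
 { apply (Rmult_le_reg_l (INR m)); auto. nra. }
 assert (0 <= L) by lra.
 assert (INR K * P <= INR K * (13/12)) by (apply Rmult_le_compat_l; lra).
 assert (L * (INR K / 12) <= L * (INR K * (2 - P) - 5/4 * sumR P0 K)) by (apply Rmult_le_compat_l; lra).
 assert (0 <= (4 * L - INR D) * INR K) by (apply Rmult_le_pos; lra).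
 assert (INR D * INR K / 48 <= L * (2 - P) * (INR K * 1) + - (5 / 4) * L * sumR P0 K) by lra.
 apply (Rmult_le_reg_l (INR K)); auto. field_simplify; [|lra]. lra. Qed.

Definition env (D : nat) (e : R) (g : nat -> nat) : nat -> nat -> R :=
  fun s k => 1/2 + (if Nat.eqb k (g (s / D)%nat) then e else 0).
Definition indl (D : nat) (g : nat -> nat) (p : det_policy) : nat -> list bool -> R :=
  fun s h => if Nat.eqb (p h) (g (s / D)%nat) then 0 else 1.

Lemma env01 : forall D e g, 0 <= e <= 1/2 -> forall s k, 0 <= env D e g s k <= 1.
Proof. intros. unfold env. destruct (Nat.eqb _ _); lra. Qed.

Lemma ExT_shift0 : forall p mu n a h f G,
  ExT p mu a h n f G = ExT p (fun s => mu (a + s)%nat) 0 h n (fun s => f (a + s)%nat) G.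
Proof. intros. pose proof (ExT_shift p mu n a 0 h f G). rewrite Nat.add_0_r in H. exact H. Qed.

Lemma avgG_const : forall K r c, (0 < K)%nat -> avgG K r (fun _ => c) = c.
Proof. induction r; simpl; intros; auto.
 rewrite (sumR_ext _ (fun _ => c)) by (intros; apply IHr; auto). rewrite sumR_const.
 assert (0 < INR K) by (apply lt_0_INR; auto). field. lra. Qed.

Lemma div_add_D : forall D s, (1 <= D)%nat -> ((D + s) / D = S (s / D))%nat.
Proof. intros. replace (D + s)%nat with (1 * D + s)%nat by lia. rewrite Nat.div_add_l by lia. lia. Qed.

Lemma decomp : forall D e p h r j g, (1 <= D)%nat ->
  ExT p (env D e (cons_g j g)) 0 h (S r * D) (indl D (cons_g j g) p) (fun _ => 0)
  = ExT p (envb e j) 0 h D (indb p j) (fun _ => 0)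
    + ExT p (envb e j) 0 h D (fun _ _ => 0)
        (fun h' => ExT p (env D e g) 0 h' (r * D) (indl D g p) (fun _ => 0)).
Proof. intros. replace (S r * D)%nat with (D + r * D)%nat by lia. rewrite ExT_split.
 rewrite <- (Rmult_1_l (ExT p (envb e j) 0 h D (indb p j) _)).
 rewrite <- (Rmult_1_l (ExT p (envb e j) 0 h D (fun _ _ => 0) _)).
 rewrite <- ExT_lin. apply ExT_ext.
 - intros. unfold env, envb. rewrite Nat.div_small by lia. reflexivity.
 - intros. unfold indl, indb. rewrite Nat.div_small by lia. simpl. ring.
 - intros. rewrite Nat.add_0_l. rewrite ExT_shift0. ring_simplify. apply ExT_ext.
   + intros. unfold env. rewrite div_add_D by auto. reflexivity.
   + intros. unfold indl. rewrite div_add_D by auto. reflexivity.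
   + auto. Qed.

Lemma MB : forall K D e, (2 <= K)%nat -> (1 <= D)%nat -> 0 <= e <= 1/2 ->
  52 * e^2 * INR ((3*D)/(2*K) + 1) <= 1 ->
  forall r p h, (forall h, (p h < K)%nat) ->
  INR r * (INR D / 48) <= avgG K r (fun g => ExT p (env D e g) 0 h (r * D) (indl D g p) (fun _ => 0)).
Proof. intros K D e HK HD He Hm. induction r; intros.
 - simpl. lra.
 - cbn [avgG].
   assert (Hj : forall j, (j < K)%nat ->
     ExT p (envb e j) 0 h D (indb p j) (fun _ => 0) + INR r * (INR D / 48) <=
     avgG K r (fun g => ExT p (env D e (cons_g j g)) 0 h (S r * D) (indl D (cons_g j g) p) (fun _ => 0))).
   { intros. rewrite (avgG_ext _ _ _ _ (fun g => decomp D e p h r j g HD)).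
     rewrite (avgG_ext K r _ (fun g => 1 * ExT p (envb e j) 0 h D (indb p j) (fun _ => 0) + 1 *
        ExT p (envb e j) 0 h D (fun _ _ => 0) (fun h' => ExT p (env D e g) 0 h' (r * D) (indl D g p) (fun _ => 0))))
       by (intros; ring).
     rewrite avgG_lin. rewrite avgG_const by lia.
     rewrite <- (avgG_ExT K r p (envb e j) D 0 h (fun g h' => ExT p (env D e g) 0 h' (r * D) (indl D g p) (fun _ => 0))).
     assert (INR r * (INR D / 48) <= ExT p (envb e j) 0 h D (fun _ _ => 0)
        (fun h' => avgG K r (fun g => ExT p (env D e g) 0 h' (r * D) (indl D g p) (fun _ => 0)))).
     { rewrite <- (ExT_const p (envb e j) D 0 h (INR r * (INR D / 48))) at 1.
       apply ExT_mono; intros; try lra. apply envb01; auto. apply IHr; auto. }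
     lra. }
   assert (sumR (fun j => ExT p (envb e j) 0 h D (indb p j) (fun _ => 0) + INR r * (INR D / 48)) K <=
     sumR (fun j => avgG K r (fun g => ExT p (env D e (cons_g j g)) 0 h (S r * D) (indl D (cons_g j g) p) (fun _ => 0))) K)
     by (apply sumR_le; auto).
   pose proof (SB K D e p h HK H He Hm).
   rewrite (sumR_ext (fun j => ExT p (envb e j) 0 h D (indb p j) (fun _ => 0) + INR r * (INR D / 48)) (fun j => 1 * ExT p (envb e j) 0 h D (indb p j) (fun _ => 0) + (INR r * (INR D / 48)) * 1) K) in H0
     by (intros; ring).
   rewrite sumR_lin, sumR_const in H0.
   assert (0 < INR K) by (apply lt_0_INR; lia).
   rewrite S_INR.
   apply (Rmult_le_reg_l (INR K)); auto.
   assert (INR K * (INR D / 48) <= sumR (fun j => ExT p (envb e j) 0 h D (indb p j) (fun _ => 0)) K).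
   { apply Rmult_le_compat_l with (r := INR K) in H1; [|lra].
     rewrite <- Rmult_assoc, Rinv_r, Rmult_1_l in H1 by lra. lra. }
   rewrite <- (Rmult_assoc (INR K) (/ INR K)), Rinv_r, Rmult_1_l by lra. lra. Qed.

Lemma maxK_ge : forall f K j, (j < K)%nat -> f j <= maxK f K.
Proof. induction K; intros; [lia|]. destruct K.
 - replace j with O by lia. simpl. lra.
 - change (maxK f (S (S K))) with (Rmax (maxK f (S K)) (f (S K))).
   destruct (Nat.eq_dec j (S K)). subst. apply Rmax_r.
   eapply Rle_trans; [apply IHK; lia| apply Rmax_l]. Qed.

Lemma maxK_le : forall f K c, (1 <= K)%nat -> (forall k, (k < K)%nat -> f k <= c) -> maxK f K <= c.
Proof. induction K; intros; [lia|]. destruct K.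
 - simpl. apply H0; lia.
 - change (maxK f (S (S K))) with (Rmax (maxK f (S K)) (f (S K))).
   apply Rmax_lub. apply IHK; auto; lia. apply H0; lia. Qed.

Lemma div_succ : forall D n, (1 <= D)%nat ->
  (S n / D = n / D + (if Nat.eqb (S n mod D) 0 then 1 else 0))%nat.
Proof. intros. pose proof (Nat.div_mod_eq n D). pose proof (Nat.mod_upper_bound n D ltac:(lia)).
 set (q := (n / D)%nat) in *. set (r := (n mod D)%nat) in *.
 destruct (Nat.eq_dec (S r) D).
 - rewrite <- (Nat.div_unique (S n) D (S q) 0) by (lia || nia).
   rewrite <- (Nat.mod_unique (S n) D (S q) 0) by (lia || nia). simpl. lia.
 - rewrite <- (Nat.div_unique (S n) D q (S r)) by (lia || nia).
   rewrite <- (Nat.mod_unique (S n) D q (S r)) by (lia || nia). simpl. lia. Qed.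

Lemma count_mult : forall D n, (1 <= D)%nat ->
  sumR (fun t => if Nat.eqb (S t mod D) 0 then 1 else 0) n = INR (n / D).
Proof. induction n; intros.
 - simpl. rewrite Nat.Div0.div_0_l by lia. reflexivity.
 - simpl sumR. rewrite IHn by auto. rewrite (div_succ D n H). rewrite plus_INR.
   destruct (Nat.eqb _ _); simpl; ring. Qed.

Lemma env_inV : forall K T VT D e g, (1 <= K)%nat -> (1 <= D)%nat -> 0 <= e <= 1/2 ->
  e * INR ((T - 1) / D) <= VT -> in_V K T VT (env D e g).
Proof. intros. split.
 - intros. apply env01; auto.
 - eapply Rle_trans; [|apply H2]. rewrite <- count_mult by auto. rewrite <- sumR_scal.
   apply sumR_le. intros t _.
   destruct (Nat.eqb (S t mod D) 0) eqn:E.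
   + apply maxK_le; auto. intros. unfold env.
     destruct (Nat.eqb k (g (t / D)%nat)), (Nat.eqb k (g (S t / D)%nat)); apply Rabs_le; lra.
   + apply maxK_le; auto. intros. unfold env. rewrite (div_succ D t H0), E, Nat.add_0_r.
     replace (1 / 2 + (if Nat.eqb k (g (t / D)%nat) then e else 0) - (1 / 2 + (if Nat.eqb k (g (t / D)%nat) then e else 0))) with 0 by ring.
     rewrite Rabs_R0. lra. Qed.

Lemma ExT_scale : forall p mu n t h a f G,
  ExT p mu t h n (fun s h => a * f s h) (fun h => a * G h) = a * ExT p mu t h n f G.
Proof. intros p mu n; induction n; simpl; intros; [reflexivity| rewrite !IHn; ring]. Qed.

Lemma maxK_env : forall K D e g s, (g (s / D) < K)%nat -> 0 <= e -> maxK (env D e g s) K = 1/2 + e.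
Proof. intros. apply Rle_antisym.
 - apply maxK_le; [lia|]. intros. unfold env. destruct (Nat.eqb _ _); lra.
 - pose proof (maxK_ge (env D e g s) K _ H). unfold env in H1 at 1. rewrite Nat.eqb_refl in H1. auto. Qed.

Lemma regret_env : forall K T m w ps D e g, (forall b, (g b < K)%nat) -> 0 <= e -> sumR w m = 1 ->
  regret K T m w ps (env D e g) = e * sumR (fun i => w i * ExT (ps i) (env D e g) 0 nil T (indl D g (ps i)) (fun _ => 0)) m.
Proof. intros. unfold regret.
 rewrite (sumR_ext (fun t => maxK (env D e g t) K) (fun t => 1/2 + e)) by (intros; apply maxK_env; auto).
 set (S := sumR (fun _ => 1/2 + e) T).
 assert (HS : forall i, S = ExT (ps i) (env D e g) 0 nil T (fun s _ => (fun _ : nat => 1/2 + e) s) (fun _ => 0)).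
 { intros. rewrite ExT_time. reflexivity. }
 transitivity (sumR (fun i => S * w i + (-1) * (w i * exp_reward (ps i) (env D e g) 0 nil T)) m).
 { rewrite sumR_lin, H1. ring. }
 rewrite <- sumR_scal. apply sumR_ext. intros.
 rewrite (HS i), exp_reward_ExT.
 assert (E1 : 1 * ExT (ps i) (env D e g) 0 nil T (fun _ _ => 1 / 2 + e) (fun _ => 0)
   + (-1) * ExT (ps i) (env D e g) 0 nil T (fun s h => env D e g s (ps i h)) (fun _ => 0)
   = e * ExT (ps i) (env D e g) 0 nil T (indl D g (ps i)) (fun _ => 0)).
 { rewrite <- ExT_lin. rewrite <- ExT_scale. apply ExT_ext; intros; auto; [|ring].
   unfold env, indl. destruct (Nat.eqb (ps i h) (g (s / D)%nat)); ring. }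
 transitivity (w i * (1 * ExT (ps i) (env D e g) 0 nil T (fun _ _ => 1 / 2 + e) (fun _ => 0)
   + (-1) * ExT (ps i) (env D e g) 0 nil T (fun s h => env D e g s (ps i h)) (fun _ => 0))). ring.
 rewrite E1. ring. Qed.

Lemma ExT_len_mono : forall p mu n1 n t h f, (n1 <= n)%nat -> (forall s k, 0 <= mu s k <= 1) ->
  (forall s h, 0 <= f s h) -> ExT p mu t h n1 f (fun _ => 0) <= ExT p mu t h n f (fun _ => 0).
Proof. intros. replace n with (n1 + (n - n1))%nat by lia. rewrite ExT_split.
 apply ExT_mono; intros; auto. lra. apply ExT_nonneg; auto. intros; lra. Qed.

Lemma GEN : forall T K D e VT m w ps M, (2 <= K)%nat -> (1 <= D)%nat -> (D <= T)%nat -> 0 <= e <= 1/2 ->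
  52 * e^2 * INR ((3*D)/(2*K) + 1) <= 1 -> e * INR ((T-1)/D) <= VT ->
  is_randomized_policy K m w ps -> (forall mu, in_V K T VT mu -> regret K T m w ps mu <= M) ->
  e * INR T / 96 <= M.
Proof. intros T K D e VT m w ps M HK HD HDT He Hm HV [Hw [Hsum Hps]] HM.
 set (B := (T / D)%nat).
 set (Ei := fun i g => ExT (ps i) (env D e g) 0 nil (B * D) (indl D g (ps i)) (fun _ => 0)).
 assert (H1 : INR B * (INR D / 48) <= avgG K B (fun g => sumR (fun i => w i * Ei i g) m)).
 { rewrite avgG_sum.
   apply Rle_trans with (sumR (fun i => w i * (INR B * (INR D / 48))) m).
   { rewrite (sumR_ext (fun i => w i * (INR B * (INR D / 48))) (fun i => (INR B * (INR D / 48)) * w i)) by (intros; ring).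
     rewrite sumR_scal, Hsum. lra. }
   apply sumR_le. intros. apply Rmult_le_compat_l. apply Hw; auto.
   unfold Ei. apply MB; auto. }
 destruct (avgG_exists K B (fun g => sumR (fun i => w i * Ei i g) m) ltac:(lia)) as [g [Hg Hle]].
 assert (H2 : sumR (fun i => w i * Ei i g) m <= sumR (fun i => w i * ExT (ps i) (env D e g) 0 nil T (indl D g (ps i)) (fun _ => 0)) m).
 { apply sumR_le. intros. apply Rmult_le_compat_l. apply Hw; auto. unfold Ei. apply ExT_len_mono.
   unfold B; rewrite Nat.mul_comm; apply Nat.Div0.mul_div_le. apply env01; auto. intros; unfold indl; destruct (Nat.eqb _ _); lra. }
 pose proof (HM (env D e g) (env_inV K T VT D e g ltac:(lia) HD He HV)).
 rewrite regret_env in H by (auto; lra).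
 assert (HBD : (T <= 2 * (B * D))%nat).
 { pose proof (Nat.div_mod_eq T D). pose proof (Nat.mod_upper_bound T D ltac:(lia)).
   assert (1 <= B)%nat by (apply Nat.div_le_lower_bound; lia). fold B in H0. nia. }
 apply le_INR in HBD. rewrite !mult_INR in HBD. simpl (INR 2) in HBD.
 assert (e * (INR B * (INR D / 48)) <= e * sumR (fun i => w i * ExT (ps i) (env D e g) 0 nil T (indl D g (ps i)) (fun _ => 0)) m)
   by (apply Rmult_le_compat_l; lra).
 assert (e * INR T <= e * (2 * (INR B * INR D))) by (apply Rmult_le_compat_l; lra).
 lra. Qed.

Lemma sq_le : forall x y, 0 <= y -> x^2 <= y^2 -> x <= y.
Proof. intros. destruct (Rle_dec x y); auto. nra. Qed.

Lemma ceil_ex : forall x T, 0 <= x <= INR T -> exists D, (D <= T)%nat /\ x <= INR D <= x + 1.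
Proof. intros. destruct (archimed x) as [H1 H2].
 assert (0 <= up x)%Z. { apply le_IZR. simpl. lra. }
 set (n := Z.to_nat (up x)).
 assert (INR n = IZR (up x)). { unfold n. rewrite INR_IZR_INZ, Z2Nat.id; auto. }
 destruct (le_lt_dec n T).
 - exists n. split; auto. lra.
 - exists T. split; auto. apply lt_INR in l. lra. Qed.

Lemma div_nonneg : forall x y, 0 <= x -> 0 < y -> 0 <= x / y.
Proof. intros. unfold Rdiv. apply Rmult_le_pos; auto. left; apply Rinv_0_lt_compat; auto. Qed.

Lemma cond52 : forall K D, (2 <= K)%nat -> (K <= D)%nat ->
  52 * (/12 * sqrt (INR K / INR D))^2 * INR ((3*D)/(2*K) + 1) <= 1.
Proof. intros.
 assert (HK : 2 <= INR K) by (apply (le_INR 2); auto).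
 assert (HD : INR K <= INR D) by (apply le_INR; auto).
 set (q := ((3*D)/(2*K))%nat).
 assert (Hq : (2*K*q <= 3*D)%nat) by (apply Nat.Div0.mul_div_le).
 apply le_INR in Hq. rewrite !mult_INR in Hq. simpl (INR 2) in Hq. simpl (INR 3) in Hq.
 rewrite plus_INR. simpl (INR 1).
 assert (Hs : sqrt (INR K / INR D) ^ 2 = INR K / INR D).
 { simpl. rewrite Rmult_1_r. apply sqrt_sqrt. apply div_nonneg; lra. }
 replace ((/12 * sqrt (INR K / INR D))^2) with (/144 * (sqrt (INR K / INR D))^2) by field.
 rewrite Hs.
 assert (INR K / INR D * (INR q + 1) <= 5/2).
 { assert (0 < / INR D) by (apply Rinv_0_lt_compat; lra).
   assert (INR K * INR q + INR K <= 5/2 * INR D) by lra.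
   replace (INR K / INR D * (INR q + 1)) with ((INR K * INR q + INR K) * / INR D) by (field; lra).
   apply Rmult_le_compat_r with (r := / INR D) in H2; [|lra].
   replace (5/2 * INR D * / INR D) with (5/2) in H2 by (field; lra). lra. }
 assert (0 <= INR K / INR D * (INR q + 1)). { apply Rmult_le_pos. apply div_nonneg; lra. pose proof (pos_INR q); lra. }
 lra. Qed.

Lemma sqrt_le1 : forall x, 0 <= x <= 1 -> 0 <= sqrt x <= 1.
Proof. intros. split. apply sqrt_pos. apply sq_le; [lra|]. simpl. rewrite !Rmult_1_r, sqrt_sqrt; lra. Qed.

Lemma caseA : forall T K D VT m w ps M, (2 <= K)%nat -> (K <= D)%nat -> (D <= T)%nat ->
  (/12 * sqrt (INR K / INR D)) * INR ((T-1)/D) <= VT -> is_randomized_policy K m w ps ->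
  (forall mu, in_V K T VT mu -> regret K T m w ps mu <= M) ->
  (/12 * sqrt (INR K / INR D)) * INR T / 96 <= M.
Proof. intros. assert (2 <= INR K) by (apply (le_INR 2); auto).
 assert (INR K <= INR D) by (apply le_INR; auto).
 pose proof (sqrt_le1 (INR K / INR D)).
 assert (INR K / INR D <= 1). { apply (Rmult_le_reg_l (INR D)); [lra|]. field_simplify; lra. }
 assert (0 <= INR K / INR D) by (apply div_nonneg; lra).
 apply (GEN T K D _ VT m w ps M); auto; try lia.
 - specialize (H7 ltac:(lra)). lra.
 - apply cond52; auto. Qed.

Theorem theorem1 :
  exists C : R, C > 0 /\
  forall (T K : nat) (VT : R),
    (1 <= T)%nat -> (2 <= K)%nat ->
    / INR K <= VT <= INR T / INR K ->
    forall (m : nat) (w : nat -> R) (ps : nat -> det_policy),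
      is_randomized_policy K m w ps ->
      forall M : R,
        (forall mu, in_V K T VT mu -> regret K T m w ps mu <= M) ->
        C * Rpower (INR K * VT) (1/3) * Rpower (INR T) (2/3) <= M.
Proof.
 exists (1/2304). split; [lra|]. intros T K VT HT HK [HV1 HV2] m w ps Hpol M HM.
 assert (HKR : 2 <= INR K) by (apply (le_INR 2); auto).
 assert (HTR : 1 <= INR T) by (apply (le_INR 1); auto).
 assert (HKV1 : 1 <= INR K * VT).
 { apply Rmult_le_compat_l with (r := INR K) in HV1; [|lra]. rewrite Rinv_r in HV1; lra. }
 assert (HKV2 : INR K * VT <= INR T).
 { apply Rmult_le_compat_l with (r := INR K) in HV2; [|lra].
   replace (INR K * (INR T / INR K)) with (INR T) in HV2 by (field; lra). lra. }
 assert (HVp : 0 < VT) by nra.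
 set (a := Rpower (INR K * VT) (1/3)). set (b := Rpower (INR T) (1/3)).
 assert (Ha : 0 < a) by (unfold a, Rpower; apply exp_pos).
 assert (Hb : 0 < b) by (unfold b, Rpower; apply exp_pos).
 assert (Ha3 : a^3 = INR K * VT).
 { rewrite <- Rpower_pow by auto. unfold a. rewrite Rpower_mult.
   replace (1/3 * INR 3) with 1 by (simpl; field). apply Rpower_1; lra. }
 assert (Hb3 : b^3 = INR T).
 { rewrite <- Rpower_pow by auto. unfold b. rewrite Rpower_mult.
   replace (1/3 * INR 3) with 1 by (simpl; field). apply Rpower_1; lra. }
 assert (Hb2 : Rpower (INR T) (2/3) = b^2).
 { rewrite <- Rpower_pow by auto. unfold b. rewrite Rpower_mult. f_equal. simpl. field. }
 rewrite Hb2. fold a.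
 assert (Hab : a <= b).
 { destruct (Rle_dec a b); auto. assert (b < a) by lra.
   assert (0 < (a-b)*(a^2+a*b+b^2)) by (apply Rmult_lt_0_compat; nra).
   lra. }
 set (x := b^2 * INR K / a^2).
 assert (Hx : x * a^2 = b^2 * INR K) by (unfold x; field; lra).
 assert (HxK : INR K <= x).
 { assert (a^2 <= b^2) by (apply pow_incr; lra).
   assert (0 < a^2) by (apply pow_lt; lra). nra. }
 destruct (Rle_dec x (INR T)) as [HxT | HxT].
 -
   destruct (ceil_ex x T ltac:(lra)) as [D [HDT [HxD HDx]]].
   assert (HDK : (K <= D)%nat) by (apply INR_le; lra).
   set (DR := INR D) in *.
   assert (HDp : 0 < DR) by lra.
   set (s := sqrt (INR K / DR)).
   assert (Hs0 : 0 <= s) by apply sqrt_pos.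
   assert (Hs2 : s^2 = INR K / DR).
   { unfold s. simpl. rewrite Rmult_1_r. apply sqrt_sqrt. apply div_nonneg; lra. }
   assert (Hs2D : s^2 * DR = INR K) by (rewrite Hs2; field; lra).
   assert (Hx3 : x^3 * VT^2 = INR T ^ 2 * INR K).
   { assert (E : (x * a^2)^3 = (b^2 * INR K)^3) by (rewrite Hx; reflexivity).
     replace ((x * a^2)^3) with (x^3 * (a^3)^2) in E by ring.
     replace ((b^2 * INR K)^3) with ((b^3)^2 * INR K^3) in E by ring.
     rewrite Ha3, Hb3 in E.
     apply (Rmult_eq_reg_l (INR K ^ 2)); [|apply pow_nonzero; lra]. transitivity (x^3 * (INR K * VT)^2). ring. rewrite E. ring. }
   assert (HD3 : x^3 <= DR^3) by (apply pow_incr; lra).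
   assert (HsT : s * INR T <= VT * DR).
   { apply sq_le. nra. apply (Rmult_le_reg_l DR); auto.
     replace (DR * (s * INR T)^2) with (s^2 * DR * INR T^2) by ring. rewrite Hs2D.
     assert (0 <= VT^2) by nra. replace (DR * (VT * DR)^2) with (VT^2 * DR^3) by ring. nra. }
   set (c := INR ((T - 1) / D)).
   assert (Hc0 : 0 <= c) by apply pos_INR.
   assert (HcD : c * DR <= INR T).
   { assert (D * ((T-1)/D) <= T)%nat. { pose proof (Nat.Div0.mul_div_le (T-1) D). lia. }
     apply le_INR in H. rewrite mult_INR in H. unfold c, DR. lra. }
   assert (Hvar : /12 * s * c <= VT).
   { assert (s * c * DR <= VT * DR) by nra. assert (s * c <= VT) by nra. nra. }
   pose proof (caseA T K D VT m w ps M HK HDK HDT Hvar Hpol HM). fold DR s in H.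
   assert (Hfin : a * b^2 <= 2 * s * INR T).
   { apply sq_le. nra. apply (Rmult_le_reg_l DR); auto.
     replace (DR * (2 * s * INR T)^2) with (4 * (s^2 * DR) * INR T^2) by ring. rewrite Hs2D.
     assert (DR <= 2 * x) by lra.
     assert (0 <= (a * b^2)^2) by nra.
     assert (HH : DR * (a * b^2)^2 <= 2 * x * (a * b^2)^2) by (apply Rmult_le_compat_r; lra).
     replace (2 * x * (a * b^2)^2) with (2 * (x * a^2) * b^4) in HH by ring. rewrite Hx in HH.
     replace (2 * (b^2 * INR K) * b^4) with (2 * (b^3)^2 * INR K) in HH by ring. rewrite Hb3 in HH.
     assert (0 <= INR T^2 * INR K) by nra. lra. }
   nra.
 -
   assert (Hc : INR ((T - 1) / T) = 0). { rewrite Nat.div_small by lia. reflexivity. }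
   assert (HxK2 : INR K > b * a^2).
   { assert (b^2 * INR K > b^3 * a^2). { rewrite <- Hx, Hb3. assert (0 < a^2) by (apply pow_lt; lra). nra. }
     assert (0 < b^2) by (apply pow_lt; lra).
     apply (Rmult_lt_reg_l (b^2)); auto. replace (b^2 * (b * a^2)) with (b^3 * a^2) by ring. lra. }
   destruct (le_lt_dec K T).
   + set (s := sqrt (INR K / INR T)).
     assert (Hs0 : 0 <= s) by apply sqrt_pos.
     assert (Hs2 : s^2 * INR T = INR K).
     { unfold s. simpl. rewrite Rmult_1_r. rewrite sqrt_sqrt. field; lra. apply div_nonneg; lra. }
     assert (Hvar : /12 * s * INR ((T-1)/T) <= VT) by (rewrite Hc; lra).
     pose proof (caseA T K T VT m w ps M HK l (le_n T) Hvar Hpol HM). fold s in H.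
     assert (Hfin : a * b^2 <= 2 * s * INR T).
     { apply sq_le. nra.
       assert ((a * b^2)^2 <= INR K * b^3).
       { replace ((a*b^2)^2) with (b^3 * (b * a^2)) by ring. rewrite (Rmult_comm (INR K)).
         apply Rmult_le_compat_l. apply pow_le; lra. lra. }
       rewrite Hb3 in H0. replace ((2 * s * INR T)^2) with (4 * (s^2 * INR T) * INR T) by ring.
       rewrite Hs2. nra. }
     nra.
   + assert (Hq : (3 * T / (2 * K) <= 1)%nat).
     { assert (2 * K * (3 * T / (2 * K)) <= 3 * T)%nat by apply Nat.Div0.mul_div_le. nia. }
     assert (Hq2 : INR (3 * T / (2 * K) + 1) <= 2).
     { apply le_INR in Hq. rewrite plus_INR. simpl (INR 1) in *. lra. }
     assert (52 * (1/12)^2 * INR (3 * T / (2 * K) + 1) <= 1) by nra.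
     pose proof (GEN T K T (1/12) VT m w ps M HK ltac:(lia) (le_n T) ltac:(lra) H ltac:(rewrite Hc; lra) Hpol HM).
     assert (a * b^2 <= b^3). { replace (b^3) with (b * b^2) by ring. apply Rmult_le_compat_r; [apply pow_le; lra| auto]. }
     rewrite Hb3 in H1. nra.
Qed.
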